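(* Let $I\subseteq\mathbb K[x_1,\dots,x_n]$ be an $\mathfrak m$-primary monomial ideal with $\mu_i=x_i^{d_i}\in G(I)$, and let $J=\langle\mu_1,\dots,\mu_n\rangle$. Then $I$ is very good if and only if $I^2=IJ$.
   Context: Let $\mathbb K$ be a field, $R=\mathbb K[x_1,\dots,x_n]$, $\mathfrak m=\langle x_1,\dots,x_n\rangle$, $\mathbb N=\{0,1,2,\dots\}$. A monomial $x_1^{\alpha_1}\cdots x_n^{\alpha_n}$ is identified with the point $(\alpha_1,\dots,\alpha_n)\in\mathbb N^n$. For a monomial ideal $I$, $G(I)$ denotes its (unique) minimal monomial generating set. If $I$ is an $\mathfrak m$-primary monomial ideal, then for each $i$ there is a unique $d_i\ge1$ with $x_i^{d_i}\in G(I)$; write $\mu_i=x_i^{d_i}$. For $(a_1,\dots,a_n)\in\mathbb N^n$ the box associated to $I$ is $B_{a_1,\dots,a_n}=([a_1d_1,(a_1+1)d_1]\times\cdots\times[a_nd_n,(a_n+1)d_n])\cap\mathbb N^n$; a monomial belongs to a box if its exponent vector does. An $\mathfrak m$-primary monomial ideal $I$ is called good if for every integer $l\ge1$, every element of $G(I^l)$ belongs to some box $B_{a_1,\dots,a_n}$ with $a_1+\dots+a_n=l-1$. For a good ideal $I$ and $a=(a_1,\dots,a_n)\in\mathbb N^n$, with $l=a_1+\dots+a_n+1$, define $I_{a_1,\dots,a_n}=\left\langle \frac{m}{\mu_1^{a_1}\cdots\mu_n^{a_n}} : m\in B_{a_1,\dots,a_n}\cap G(I^l)\right\rangle$. A good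 ideal $I$ is called very good if $I_{a}=I$ for all $a\in\mathbb N^n$. *)

(* Defs.v *)
(* Monomial ideals of K[x_1,...,x_n] are modelled by their
   sets of monomials, i.e. sets of exponent vectors in N^n. *)
From mathcomp Require Import all_boot.
Set Implicit Arguments. Unset Strict Implicit. Unset Printing Implicit Defensive.

Definition mono (n : nat) := {ffun 'I_n -> nat}.

Definition mdiv n (a b : mono n) : Prop := forall i, a i <= b i.

Definition madd n (a b : mono n) : mono n := [ffun i => a i + b i].

Definition xpow n (i : 'I_n) (k : nat) : mono n := [ffun j => if j == i then k else 0].

Definition mset n := mono n -> Prop.

Definition is_monomial_ideal n (I : mset n) : Prop :=
  forall a b, I a -> mdiv a b -> I b.

Definition gen n (S : mset n) : mset n := fun m => exists2 s, S s & mdiv s m.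

Definition ideal_eq n (I J : mset n) : Prop := forall m, I m <-> J m.

Definition imul n (I J : mset n) : mset n :=
  fun m => exists a b, [/\ I a, J b & mdiv (madd a b) m].

Definition ione n : mset n := fun _ => True.
Arguments ione : clear implicits.

Fixpoint ipow n (I : mset n) (l : nat) : mset n :=
  if l is l'.+1 then imul I (ipow I l') else ione n.

Definition G n (I : mset n) : mset n :=
  fun m => I m /\ forall m', I m' -> mdiv m' m -> m' = m.

Definition m_primary n (I : mset n) : Prop :=
  is_monomial_ideal I /\ ~ I [ffun _ => 0] /\ forall i, exists k, I (xpow i k).

Definition in_box n (d : 'I_n -> nat) (a : mono n) (m : mono n) : Prop :=
  forall i, a i * d i <= m i <= (a i).+1 * d i.

Definition asum n (a : mono n) : nat := \sum_(i < n) a i.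

Definition good n (I : mset n) (d : 'I_n -> nat) : Prop :=
  forall l, 1 <= l -> forall m, G (ipow I l) m ->
    exists a : mono n, asum a = l.-1 /\ in_box d a m.

(* I_{a} = < m / (mu_1^{a_1} ... mu_n^{a_n}) : m in B_a cap G(I^l) >, l = |a|+1 *)
Definition Ia n (I : mset n) (d : 'I_n -> nat) (a : mono n) : mset n :=
  gen (fun q => exists m, [/\ G (ipow I (asum a).+1) m, in_box d a m &
                            q = [ffun i => m i - a i * d i]]).

Definition very_good n (I : mset n) (d : 'I_n -> nat) : Prop :=
  good I d /\ forall a : mono n, ideal_eq (Ia I d a) I.

Definition Jpure n (d : 'I_n -> nat) : mset n :=
  gen (fun q => exists i, q = xpow i (d i)).

(* Main.v *)
Require Import Defs.
From mathcomp Require Import all_boot.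
From mathcomp Require Import zify.
From Stdlib Require Import Classical.
Set Implicit Arguments. Unset Strict Implicit. Unset Printing Implicit Defensive.

Definition mulv n (b : mono n) (d : 'I_n -> nat) : mono n := [ffun i => b i * d i].

Lemma mdiv_refl n (a : mono n) : mdiv a a. Proof. by move=> i. Qed.
Lemma mdiv_trans n (a b c : mono n) : mdiv a b -> mdiv b c -> mdiv a c.
Proof. move=> h1 h2 i; exact: leq_trans (h1 i) (h2 i). Qed.
Lemma mdiv_anti n (a b : mono n) : mdiv a b -> mdiv b a -> a = b.
Proof. move=> h1 h2; apply/ffunP=> i; by apply/eqP; rewrite eqn_leq h1 h2. Qed.

Lemma asum_lt n (x y : mono n) i : (forall j, x j <= y j) -> x i < y i -> asum x < asum y.
Proof.
move=> le lt; rewrite /asum (bigD1 i) //= [X in _ < X](bigD1 i) //=.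
rewrite -addSn leq_add // leq_sum // => j _; exact: le.
Qed.

Lemma asum_eqpw n (x y : mono n) : (forall j, x j <= y j) -> asum x = asum y -> forall i, x i = y i.
Proof.
move=> le hs i; apply/eqP; rewrite eqn_leq le /=; apply/negP => /negP; rewrite -ltnNge => lt.
by have := asum_lt le lt; rewrite hs ltnn.
Qed.

Lemma mdiv_lt n (a b : mono n) : mdiv a b -> a <> b -> asum a < asum b.
Proof.
move=> h ne; have [i lt] : exists i, a i < b i.
  apply: NNPP => hn; apply: ne; apply/ffunP => i; apply/eqP; rewrite eqn_leq h /=.
  by rewrite leqNgt; apply/negP => lt; apply: hn; exists i.
exact: asum_lt lt.
Qed.

Lemma exists_min n (S : mset n) m : S m -> exists2 g, G S g & mdiv g m.
Proof.
have [k] := ubnP (asum m); elim: k m => // k IH m Hk Sm.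
case: (classic (forall m', S m' -> mdiv m' m -> m' = m)) => H.
  by exists m => //; split.
have [m' Hm'] := not_all_ex_not _ _ H.
have [Sm' [dm' ne]] : S m' /\ mdiv m' m /\ m' <> m by tauto.
have [g Gg dg] := IH m' (leq_trans (mdiv_lt dm' ne) Hk) Sm'.
by exists g => //; exact: mdiv_trans dg dm'.
Qed.

Lemma asum_add n (x y : mono n) : asum (madd x y) = asum x + asum y.
Proof. by rewrite /asum -big_split; apply: eq_bigr => i _; rewrite ffunE. Qed.

Lemma asum_xpow n (k : 'I_n) c : asum (xpow k c) = c.
Proof.
rewrite /asum (bigD1 k) //= big1 ?ffunE ?eqxx ?addn0 // => i /negbTE ne.
by rewrite ffunE ne.
Qed.

Lemma asum_pos n (b : mono n) l : asum b = l.+1 -> exists k, 0 < b k.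
Proof.
move=> h; case: (pickP (fun k => 0 < b k)) => [k hk|hn]; first by exists k.
move: h; rewrite /asum big1 // => i _; move: (hn i) => /= /negbT; by rewrite -leqNgt leqn0 => /eqP.
Qed.

Lemma asum_dec n (b : mono n) k : 0 < b k -> asum b = (asum [ffun i => b i - (i == k)]).+1.
Proof.
move=> hk; have E : b = madd [ffun i => b i - (i == k)] (xpow k 1).
  apply/ffunP => i; rewrite !ffunE; case: eqP => [->|]; rewrite ?eqxx /=; lia.
by rewrite {1}E asum_add asum_xpow addn1.
Qed.

Lemma Gpure n (I : mset n) (d : 'I_n -> nat)
  (hd : forall i, 1 <= d i /\ G I (xpow i (d i))) g i :
  G I g -> d i <= g i -> g = xpow i (d i).
Proof.
move=> [Ig Gg] le; symmetry; apply: Gg; first by case: (hd i) => _ [].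
by move=> j; rewrite ffunE; case: eqP => [->|].
Qed.

Lemma Gle n (I : mset n) (d : 'I_n -> nat)
  (hd : forall i, 1 <= d i /\ G I (xpow i (d i))) g i :
  G I g -> g i <= d i.
Proof.
move=> Gg; rewrite leqNgt; apply/negP => lt.
have E := Gpure hd Gg (ltnW lt); by move: lt; rewrite E ffunE eqxx ltnn.
Qed.

Lemma small n (I : mset n) (d : 'I_n -> nat)
  (hd : forall i, 1 <= d i /\ G I (xpow i (d i))) h j :
  I h -> mdiv h (xpow j (d j)) -> h = xpow j (d j).
Proof. by move=> Ih le; case: (hd j) => _ [_ H]; apply: H. Qed.

Lemma PowIn n (I : mset n) (d : 'I_n -> nat)
  (hd : forall i, 1 <= d i /\ G I (xpow i (d i))) l :
  forall b h m, asum b = l -> I h -> mdiv (madd h (mulv b d)) m -> ipow I l.+1 m.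
Proof.
elim: l => [|l IH] b h m hb Ih hm.
  by exists h, (mulv b d); split.
have [k hk] := asum_pos hb.
have hb' := asum_dec hk; rewrite hb in hb'; case: hb' => hb'.
exists (xpow k (d k)), (madd h (mulv [ffun i => b i - (i == k)] d)); split.
- by case: (hd k) => _ [].
- exact: (IH _ h _ (esym hb') Ih (mdiv_refl _)).
move=> i; move: (hm i); rewrite !ffunE; case: eqP => [->|] /=; nia.
Qed.

Lemma PowChar n (I : mset n) (d : 'I_n -> nat)
  (H2 : ideal_eq (ipow I 2) (imul I (Jpure d))) l :
  forall m, ipow I l.+1 m -> exists h b, [/\ I h, asum b = l & mdiv (madd h (mulv b d)) m].
Proof.
elim: l => [|l IH] m.
  move=> [a [c [Ia _ hm]]]; exists a, [ffun => 0]; split => //.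
    by rewrite /asum big1 // => i _; rewrite ffunE.
  by move=> i; move: (hm i); rewrite !ffunE; lia.
move=> [a [c [Ia Ic hm]]].
have [h [b [Ih hb hc]]] := IH _ Ic.
have : ipow I 2 (madd a h).
  exists a, h; split => //.
    exists h, [ffun => 0]; split => //.
    by move=> i; rewrite !ffunE; lia.
move=> /H2 [h' [j [Ih' [s [k ->] hs] hj]]].
exists h', (madd b (xpow k 1)); split => //.
  by rewrite asum_add asum_xpow hb addn1.
move=> i; move: (hm i) (hc i) (hj i) (hs i); rewrite !ffunE.
case: eqP => [->|] /=; nia.
Qed.

Lemma Gform n (I : mset n) (d : 'I_n -> nat)
  (hd : forall i, 1 <= d i /\ G I (xpow i (d i)))
  (H2 : ideal_eq (ipow I 2) (imul I (Jpure d))) l m :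
  G (ipow I l.+1) m -> exists g b, [/\ G I g, asum b = l & m = madd g (mulv b d)].
Proof.
move=> [Im Gm].
have [h [b [Ih hb hm]]] := PowChar H2 Im.
have [g Gg hg] := exists_min Ih.
exists g, b; split => //; symmetry; apply: Gm.
  apply: (PowIn hd (b := b) (h := g)) => //; first by case: Gg.
by move=> i; move: (hm i) (hg i); rewrite !ffunE; lia.
Qed.

Lemma comb n (x y : mono n) : (forall j, x j <= y j) -> asum y = (asum x).+1 ->
  exists j, forall i, y i = x i + (i == j).
Proof.
move=> le hs.
have [j hj] : exists j, x j < y j.
  apply: NNPP => hn.
  have le' : forall j, y j <= x j by move=> j; rewrite leqNgt; apply/negP => h; apply: hn; exists j.
  have E : asum x = asum y.
    by apply/eqP; rewrite eqn_leq; apply/andP; split; rewrite /asum leq_sum.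
  move: hs; rewrite E; lia.
exists j.
have le2 : forall i, madd x (xpow j 1) i <= y i.
  by move=> i; have := le i; rewrite !ffunE; case: eqP => [->|]; lia.
move=> i; have := asum_eqpw le2; rewrite asum_add asum_xpow addn1 hs => /(_ erefl i).
by rewrite !ffunE; case: eqP => [->|]; rewrite ?eqxx; lia.
Qed.

Ltac eqcases := repeat (case: eqP => [?|?]; try subst); try (exfalso; congruence).

Theorem mainTheorem18 (n : nat) (I : mset n) (d : 'I_n -> nat)
  (hI : m_primary I)
  (hd : forall i, 1 <= d i /\ G I (xpow i (d i))) :
  very_good I d <-> ideal_eq (ipow I 2) (imul I (Jpure d)).
Proof.
have mi : is_monomial_ideal I by case: hI.
have Ix : forall i, I (xpow i (d i)) by move=> i; case: (hd i) => _ [].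
split.
- move=> [good Iaeq] m; split.
  + move=> I2m; have [m0 Gm0 hm0] := exists_min I2m.
    have [a [ha hbox]] := good 2 isT m0 Gm0.
    have Iq : I [ffun i => m0 i - a i * d i].
      apply/(Iaeq a); exists [ffun i => m0 i - a i * d i]; last by move=> i.
      by exists m0; split => //; rewrite ha.
    have [k hk] := asum_pos ha.
    exists [ffun i => m0 i - a i * d i], (xpow k (d k)); split => //.
      by exists (xpow k (d k)); [exists k | move=> i].
    move=> i; move: (hm0 i) (hbox i); rewrite !ffunE; case: eqP => [->|] /=; nia.
  + move=> [a [b [Ia [s [k ->] hs] hab]]].
    have Ib : I b := mi _ _ (Ix k) hs.
    exists a, b; split => //.
    exists b, [ffun => 0]; split => //.
    by move=> i; rewrite !ffunE; lia.
- move=> H2; split.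
  + move=> [//|l] _ m Gm.
    have [g [b [Gg hb ->]]] := Gform hd H2 Gm.
    exists b; split => // i; rewrite !ffunE; have := @Gle _ _ _ hd _ i Gg; nia.
  + move=> a q; split.
    * move=> [s [m [Gm hbox ->]] hs]; apply: (mi _ _ _ hs).
      have [g [b [Gg hb Em]]] := Gform hd H2 Gm.
      case: (classic (exists k, b k < a k)) => [[k hk]|hn].
      - have gk : d k <= g k.
          by move: (hbox k); rewrite Em !ffunE; nia.
        have Eg := Gpure hd Gg gk.
        have [i hi] : exists i, a i < b i.
          apply: NNPP => hn.
          have le : forall i, b i <= a i.
            by move=> i; rewrite leqNgt; apply/negP => h; apply: hn; exists i.
          have := asum_eqpw le hb k; lia.
        apply: (mi (xpow i (d i))) => // j; rewrite !ffunE Em Eg !ffunE.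
        eqcases; nia.
      - have le : forall k, a k <= b k.
          by move=> k; rewrite leqNgt; apply/negP => h; apply: hn; exists k.
        have eab := asum_eqpw le (esym hb).
        apply: (mi g); first by case: Gg.
        by move=> j; rewrite Em !ffunE eab; lia.
    * move=> Iq; have [g Gg hg] := exists_min Iq.
      exists [ffun i => (madd g (mulv a d)) i - a i * d i]; last first.
        by move=> i; rewrite !ffunE; have := hg i; lia.
      exists (madd g (mulv a d)); split => //; last first.
        by move=> i; rewrite !ffunE; have := @Gle _ _ _ hd _ i Gg; nia.
      split.
        by apply: (PowIn hd (b := a) (h := g)) => //; case: Gg.
      move=> m' Im' hm'.
      have [h' [b [Ih' hb hmb]]] := PowChar H2 Im'.
      suff E : madd h' (mulv b d) = madd g (mulv a d).
        by apply: mdiv_anti => //; rewrite -E.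
      case: (classic (exists k, a k < b k)) => [[k hk]|hn].
      + have gk : d k <= g k.
          by move: (hmb k) (hm' k); rewrite !ffunE; nia.
        have Eg := Gpure hd Gg gk.
        have hc : forall j, b j <= (madd a (xpow k 1)) j.
          move=> j; have := leq_trans (hmb j) (hm' j); rewrite Eg !ffunE => hj.
          have dj := (hd j).1.
          have : b j * d j <= (a j + (if j == k then 1 else 0)) * d j.
            by move: hj; eqcases; nia.
          by rewrite leq_pmul2r.
        have hsc : asum (madd a (xpow k 1)) = (asum b).+1.
          by rewrite asum_add asum_xpow hb addn1.
        have [j Ec] := comb hc hsc.
        have Eh : h' = xpow j (d j).
          apply: (small hd Ih') => i; have := leq_trans (hmb i) (hm' i).
          have := Ec i; rewrite Eg !ffunE.
          by eqcases; nia.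
        apply/ffunP => i; have := Ec i; rewrite Eh Eg !ffunE.
        by eqcases; nia.
      + have le : forall k, b k <= a k.
          by move=> k; rewrite leqNgt; apply/negP => h; apply: hn; exists k.
        have eab := asum_eqpw le hb.
        have Eh : h' = g.
          case: Gg => _ Gg; apply: Gg => // i.
          by move: (hmb i) (hm' i); rewrite !ffunE eab; lia.
        by apply/ffunP => i; rewrite Eh !ffunE eab.
Qed.
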